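(* Let $\Omega_n=\dfrac{\pi^{n/2}}{\Gamma\left(\frac n2+1\right)}$ for $n\in\mathbb{N}_0$, and \[ \varepsilon_1(n)=-\frac{\frac14\pi-4\pi^2+8\pi^3}{n^3},\qquad \varepsilon_2(n)=\varepsilon_1(n)+\frac{\frac38\pi-7\pi^2-12\pi^3+64\pi^4}{n^4}. \] Then for every $n\in\mathbb{N}$, \[ \sqrt{\frac{2\pi}{n+4\pi+\frac12}+\varepsilon_1(n)}<\frac{\Omega_n}{\Omega_{n-1}+\Omega_{n+1}}<\sqrt{\frac{2\pi}{n+4\pi+\frac12}+\varepsilon_2(n)}. \]
   Context: $\Omega_n$ is the volume of the unit ball in $\mathbb{R}^n$ ($\Omega_0=1$); $\Gamma$ is Euler's gamma function. *)

(* Defs.v *)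
From Stdlib Require Import Reals.
From Coquelicot Require Import Coquelicot.
Open Scope R_scope.

(* Euler's Gamma function, Gamma(s) = \int_0^{+oo} t^(s-1) e^(-t) dt
   (used here only for s >= 1, where the integral converges). *)
Definition Gamma (s : R) : R :=
  RInt_gen (fun t => Rpower t (s - 1) * exp (- t)) (at_right 0) (Rbar_locally p_infty).

Definition Omega (n : nat) : R :=
  Rpower PI (INR n / 2) / Gamma (INR n / 2 + 1).

Definition eps_1 (n : nat) : R :=
  - (/4 * PI - 4 * PI ^ 2 + 8 * PI ^ 3) / INR n ^ 3.

Definition eps_2 (n : nat) : R :=
  eps_1 n + (3/8 * PI - 7 * PI ^ 2 - 12 * PI ^ 3 + 64 * PI ^ 4) / INR n ^ 4.

(* Main.v *)
Require Import Defs.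
From Stdlib Require Import Reals Lra Lia Machin Factorial.
From Coquelicot Require Import Coquelicot.
Open Scope R_scope.

Notation pa := (314159265/100000000).
Notation pb := (314159266/100000000).
Definition cc1 (p : R) := /4*p - 4*p^2 + 8*p^3.
Definition dd (p : R) := 3/8*p - 7*p^2 - 12*p^3 + 64*p^4.
Definition Qu (x p : R) := 2*p*x^4 + (-(cc1 p)*x + dd p)*(x+4*p+/2).
Definition Ql (x p : R) := 2*p*x^4 + (-(cc1 p)*x)*(x+4*p+/2).
Lemma shift_pa (p : R) : pa <= p <= pb -> exists t, p = pa + t /\ 0 <= t <= 1/100000000.
Proof. intros H. exists (p - pa). split; [ring|lra]. Qed.
Lemma pow_bnd (t : R) (k : nat) : 0 <= t <= 1/100000000 -> 0 <= t^k <= (1/100000000)^k.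
Proof. intros [H1 H2]. split. apply pow_le; auto. apply pow_incr; auto. Qed.
Lemma prod_lb (c r m : R) (k : nat) : r <= c -> 0 <= m -> r * m^k <= c * m^k.
Proof. intros. apply Rmult_le_compat_r; auto. apply pow_le; auto. Qed.
Ltac coef_tac := let Hp := fresh "Hp" in let t := fresh "t" in let Ht := fresh "Ht" in
  intros Hp; destruct (shift_pa _ Hp) as [t [-> Ht]];
  pose proof (pow_bnd t 1 Ht); pose proof (pow_bnd t 2 Ht); pose proof (pow_bnd t 3 Ht);
  pose proof (pow_bnd t 4 Ht); pose proof (pow_bnd t 5 Ht); pose proof (pow_bnd t 6 Ht);
  pose proof (pow_bnd t 7 Ht); pose proof (pow_bnd t 8 Ht); pose proof (pow_bnd t 9 Ht);
  pose proof (pow_bnd t 10 Ht); lra.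
Lemma PU1_c0 (p:R) : pa <= p <= pb -> (39282357/500) <= (35/16)*p^1 + (-4)*p^2 + (-42)*p^3 + (16)*p^4 + (256)*p^5.
Proof. coef_tac. Qed.

Lemma PU1_c1 (p:R) : pa <= p <= pb -> (2665077/1000) <= (31/4)*p^1 + (2)*p^2 + (-16)*p^3 + (32)*p^4.
Proof. coef_tac. Qed.

Lemma PU1_c2 (p:R) : pa <= p <= pb -> (-171659/1000) <= (47/4)*p^1 + (4)*p^2 + (-8)*p^3.
Proof. coef_tac. Qed.

Lemma PU1_c3 (p:R) : pa <= p <= pb -> (6283/250) <= (8)*p^1.
Proof. coef_tac. Qed.

Lemma PU1_c4 (p:R) : pa <= p <= pb -> (6283/1000) <= (2)*p^1.
Proof. coef_tac. Qed.

Lemma PU1 (x p : R) : (1) <= x -> pa <= p <= pb -> 0 < Qu x p.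
Proof.
intros Hx Hp.
assert (Heq : Qu x p = ((35/16)*p^1 + (-4)*p^2 + (-42)*p^3 + (16)*p^4 + (256)*p^5)*(x - (1))^0 + ((31/4)*p^1 + (2)*p^2 + (-16)*p^3 + (32)*p^4)*(x - (1))^1 + ((47/4)*p^1 + (4)*p^2 + (-8)*p^3)*(x - (1))^2 + ((8)*p^1)*(x - (1))^3 + ((2)*p^1)*(x - (1))^4) by (unfold Qu, Ql, cc1, dd; lra).
rewrite Heq; clear Heq.
assert (Hm : 0 <= x - (1)) by lra.
set (m := x - (1)) in *. clearbody m.
pose proof (prod_lb _ _ m 0 (PU1_c0 p Hp) Hm).
pose proof (pow_le m 0 Hm).
pose proof (prod_lb _ _ m 1 (PU1_c1 p Hp) Hm).
pose proof (pow_le m 1 Hm).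
pose proof (prod_lb _ _ m 2 (PU1_c2 p Hp) Hm).
pose proof (pow_le m 2 Hm).
pose proof (prod_lb _ _ m 3 (PU1_c3 p Hp) Hm).
pose proof (pow_le m 3 Hm).
pose proof (prod_lb _ _ m 4 (PU1_c4 p Hp) Hm).
pose proof (pow_le m 4 Hm).
assert (0 <= m*(m-7/2)^2) by (apply Rmult_le_pos; [lra| apply pow2_ge_0]).
lra.
Qed.

Lemma PU2_c0 (p:R) : pa <= p <= pb -> (12346821601691/1000) <= (1107/2)*p^1 + (-17457/2)*p^2 + (-845105/8)*p^3 + (-251595)*p^4 + (324028)*p^5 + (1604800)*p^6 + (1713408)*p^7 + (585728)*p^8.
Proof. coef_tac. Qed.

Lemma PU2_c1 (p:R) : pa <= p <= pb -> (3645286891947/200) <= (5439/4)*p^1 + (-200425/8)*p^2 + (-1044679/4)*p^3 + (-486704)*p^4 + (1083384)*p^5 + (3402496)*p^6 + (2749952)*p^7 + (671744)*p^8.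
Proof. coef_tac. Qed.

Lemma PU2_c2 (p:R) : pa <= p <= pb -> (5404314612159/500) <= (42867/32)*p^1 + (-115921/4)*p^2 + (-2123365/8)*p^3 + (-366283)*p^4 + (1325004)*p^5 + (2859200)*p^6 + (1686784)*p^7 + (274432)*p^8.
Proof. coef_tac. Qed.

Lemma PU2_c3 (p:R) : pa <= p <= pb -> (1590873194621/500) <= (10871/16)*p^1 + (-139005/8)*p^2 + (-141926)*p^3 + (-129166)*p^4 + (804656)*p^5 + (1193600)*p^6 + (468992)*p^7 + (40960)*p^8.
Proof. coef_tac. Qed.

Lemma PU2_c4 (p:R) : pa <= p <= pb -> (462314080747/1000) <= (6039/32)*p^1 + (-5716)*p^2 + (-84039/2)*p^3 + (-18084)*p^4 + (261328)*p^5 + (246528)*p^6 + (49152)*p^7.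
Proof. coef_tac. Qed.

Lemma PU2_c5 (p:R) : pa <= p <= pb -> (16117764161/500) <= (219/8)*p^1 + (-1957/2)*p^2 + (-6498)*p^3 + (504)*p^4 + (43136)*p^5 + (19968)*p^6.
Proof. coef_tac. Qed.

Lemma PU2_c6 (p:R) : pa <= p <= pb -> (174674313/200) <= (13/8)*p^1 + (-68)*p^2 + (-408)*p^3 + (256)*p^4 + (2816)*p^5.
Proof. coef_tac. Qed.

Lemma PU2 (x p : R) : (1) <= x -> pa <= p <= pb -> 0 < Qu x p*(x+1+2*p)^2*(x+2)^2*(x+2+4*p+/2)*(x+3)^2 - Qu (x+2) p*(x+3+2*p)^2*x^4*(x+4*p+/2).
Proof.
intros Hx Hp.
assert (Heq : Qu x p*(x+1+2*p)^2*(x+2)^2*(x+2+4*p+/2)*(x+3)^2 - Qu (x+2) p*(x+3+2*p)^2*x^4*(x+4*p+/2) = ((1107/2)*p^1 + (-17457/2)*p^2 + (-845105/8)*p^3 + (-251595)*p^4 + (324028)*p^5 + (1604800)*p^6 + (1713408)*p^7 + (585728)*p^8)*(x - (1))^0 + ((5439/4)*p^1 + (-200425/8)*p^2 + (-1044679/4)*p^3 + (-486704)*p^4 + (1083384)*p^5 + (3402496)*p^6 + (2749952)*p^7 + (671744)*p^8)*(x - (1))^1 + ((42867/32)*p^1 + (-115921/4)*p^2 + (-2123365/8)*p^3 + (-366283)*p^4 + (1325004)*p^5 + (2859200)*p^6 + (1686784)*p^7 + (274432)*p^8)*(x - (1))^2 + ((10871/16)*p^1 + (-139005/8)*p^2 +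 (-141926)*p^3 + (-129166)*p^4 + (804656)*p^5 + (1193600)*p^6 + (468992)*p^7 + (40960)*p^8)*(x - (1))^3 + ((6039/32)*p^1 + (-5716)*p^2 + (-84039/2)*p^3 + (-18084)*p^4 + (261328)*p^5 + (246528)*p^6 + (49152)*p^7)*(x - (1))^4 + ((219/8)*p^1 + (-1957/2)*p^2 + (-6498)*p^3 + (504)*p^4 + (43136)*p^5 + (19968)*p^6)*(x - (1))^5 + ((13/8)*p^1 + (-68)*p^2 + (-408)*p^3 + (256)*p^4 + (2816)*p^5)*(x - (1))^6) by (unfold Qu, Ql, cc1, dd; lra).
rewrite Heq; clear Heq.
assert (Hm : 0 <= x - (1)) by lra.
set (m := x - (1)) in *. clearbody m.
pose proof (prod_lb _ _ m 0 (PU2_c0 p Hp) Hm).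
pose proof (pow_le m 0 Hm).
pose proof (prod_lb _ _ m 1 (PU2_c1 p Hp) Hm).
pose proof (pow_le m 1 Hm).
pose proof (prod_lb _ _ m 2 (PU2_c2 p Hp) Hm).
pose proof (pow_le m 2 Hm).
pose proof (prod_lb _ _ m 3 (PU2_c3 p Hp) Hm).
pose proof (pow_le m 3 Hm).
pose proof (prod_lb _ _ m 4 (PU2_c4 p Hp) Hm).
pose proof (pow_le m 4 Hm).
pose proof (prod_lb _ _ m 5 (PU2_c5 p Hp) Hm).
pose proof (pow_le m 5 Hm).
pose proof (prod_lb _ _ m 6 (PU2_c6 p Hp) Hm).
pose proof (pow_le m 6 Hm).
lra.
Qed.

Lemma PU3_c0 (p:R) : pa <= p <= pb -> (32342143051/1000) <= (81/2)*p^1 + (-23)*p^2 + (-2295/2)*p^3 + (-1728)*p^4 + (5904)*p^5 + (12672)*p^6 + (6144)*p^7.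
Proof. coef_tac. Qed.

Lemma PU3_c1 (p:R) : pa <= p <= pb -> (14294940527/1000) <= (717/4)*p^1 + (218)*p^2 + (-5589/4)*p^3 + (-864)*p^4 + (8664)*p^5 + (9024)*p^6 + (1024)*p^7.
Proof. coef_tac. Qed.

Lemma PU3_c2 (p:R) : pa <= p <= pb -> (2146263139/1000) <= (2863/8)*p^1 + (2419/4)*p^2 + (-507)*p^3 + (96)*p^4 + (3392)*p^5 + (1152)*p^6.
Proof. coef_tac. Qed.

Lemma PU3_c3 (p:R) : pa <= p <= pb -> (116065579/1000) <= (6187/16)*p^1 + (567)*p^2 + (-51)*p^3 + (32)*p^4 + (352)*p^5.
Proof. coef_tac. Qed.

Lemma PU3_c4 (p:R) : pa <= p <= pb -> (3026111/1000) <= (925/4)*p^1 + (233)*p^2.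
Proof. coef_tac. Qed.

Lemma PU3_c5 (p:R) : pa <= p <= pb -> (116143/200) <= (287/4)*p^1 + (36)*p^2.
Proof. coef_tac. Qed.

Lemma PU3_c6 (p:R) : pa <= p <= pb -> (14137/500) <= (9)*p^1.
Proof. coef_tac. Qed.

Lemma PU3 (x p : R) : (1) <= x -> pa <= p <= pb -> 0 < Qu x p*(x+1+2*p)^2*(x+5) - 2*p*x^4*(x+4*p+/2)*(x+1)^2.
Proof.
intros Hx Hp.
assert (Heq : Qu x p*(x+1+2*p)^2*(x+5) - 2*p*x^4*(x+4*p+/2)*(x+1)^2 = ((81/2)*p^1 + (-23)*p^2 + (-2295/2)*p^3 + (-1728)*p^4 + (5904)*p^5 + (12672)*p^6 + (6144)*p^7)*(x - (1))^0 + ((717/4)*p^1 + (218)*p^2 + (-5589/4)*p^3 + (-864)*p^4 + (8664)*p^5 + (9024)*p^6 + (1024)*p^7)*(x - (1))^1 + ((2863/8)*p^1 + (2419/4)*p^2 + (-507)*p^3 + (96)*p^4 + (3392)*p^5 + (1152)*p^6)*(x - (1))^2 + ((6187/16)*p^1 + (567)*p^2 + (-51)*p^3 + (32)*p^4 + (352)*p^5)*(x - (1))^3 + ((925/4)*p^1 + (233)*p^2)*(x - (1))^4 + ((287/4)*p^1 + (36)*p^2)*(x - (1))^5 + ((9)*p^1)*(x - (1))^6) by (unfold Qu, Ql, cc1, dd; lra).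
rewrite Heq; clear Heq.
assert (Hm : 0 <= x - (1)) by lra.
set (m := x - (1)) in *. clearbody m.
pose proof (prod_lb _ _ m 0 (PU3_c0 p Hp) Hm).
pose proof (pow_le m 0 Hm).
pose proof (prod_lb _ _ m 1 (PU3_c1 p Hp) Hm).
pose proof (pow_le m 1 Hm).
pose proof (prod_lb _ _ m 2 (PU3_c2 p Hp) Hm).
pose proof (pow_le m 2 Hm).
pose proof (prod_lb _ _ m 3 (PU3_c3 p Hp) Hm).
pose proof (pow_le m 3 Hm).
pose proof (prod_lb _ _ m 4 (PU3_c4 p Hp) Hm).
pose proof (pow_le m 4 Hm).
pose proof (prod_lb _ _ m 5 (PU3_c5 p Hp) Hm).
pose proof (pow_le m 5 Hm).
pose proof (prod_lb _ _ m 6 (PU3_c6 p Hp) Hm).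
pose proof (pow_le m 6 Hm).
lra.
Qed.

Lemma PL1_c0 (p:R) : pa <= p <= pb -> (7270373/500) <= (79895/4)*p^1 + (410)*p^2 + (-680)*p^3 + (-320)*p^4.
Proof. coef_tac. Qed.

Lemma PL1_c1 (p:R) : pa <= p <= pb -> (9105029/500) <= (63959/8)*p^1 + (81)*p^2 + (-148)*p^3 + (-32)*p^4.
Proof. coef_tac. Qed.

Lemma PL1_c2 (p:R) : pa <= p <= pb -> (3560553/1000) <= (4799/4)*p^1 + (4)*p^2 + (-8)*p^3.
Proof. coef_tac. Qed.

Lemma PL1_c3 (p:R) : pa <= p <= pb -> (251327/1000) <= (80)*p^1.
Proof. coef_tac. Qed.

Lemma PL1_c4 (p:R) : pa <= p <= pb -> (6283/1000) <= (2)*p^1.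
Proof. coef_tac. Qed.

Lemma PL1 (x p : R) : (10) <= x -> pa <= p <= pb -> 0 < Ql x p.
Proof.
intros Hx Hp.
assert (Heq : Ql x p = ((79895/4)*p^1 + (410)*p^2 + (-680)*p^3 + (-320)*p^4)*(x - (10))^0 + ((63959/8)*p^1 + (81)*p^2 + (-148)*p^3 + (-32)*p^4)*(x - (10))^1 + ((4799/4)*p^1 + (4)*p^2 + (-8)*p^3)*(x - (10))^2 + ((80)*p^1)*(x - (10))^3 + ((2)*p^1)*(x - (10))^4) by (unfold Qu, Ql, cc1, dd; lra).
rewrite Heq; clear Heq.
assert (Hm : 0 <= x - (10)) by lra.
set (m := x - (10)) in *. clearbody m.
pose proof (prod_lb _ _ m 0 (PL1_c0 p Hp) Hm).
pose proof (pow_le m 0 Hm).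
pose proof (prod_lb _ _ m 1 (PL1_c1 p Hp) Hm).
pose proof (pow_le m 1 Hm).
pose proof (prod_lb _ _ m 2 (PL1_c2 p Hp) Hm).
pose proof (pow_le m 2 Hm).
pose proof (prod_lb _ _ m 3 (PL1_c3 p Hp) Hm).
pose proof (pow_le m 3 Hm).
pose proof (prod_lb _ _ m 4 (PL1_c4 p Hp) Hm).
pose proof (pow_le m 4 Hm).
lra.
Qed.

Lemma PL2_c0 (p:R) : pa <= p <= pb -> (390499125309737/125) <= (57417750)*p^1 + (-935652120)*p^2 + (-2257124520)*p^3 + (7825159680)*p^4 + (4514208000)*p^5 + (903475200)*p^6 + (63160320)*p^7.
Proof. coef_tac. Qed.

Lemma PL2_c1 (p:R) : pa <= p <= pb -> (409550300440287/250) <= (35341995)*p^1 + (-586697372)*p^2 + (-1354893412)*p^3 + (4981203968)*p^4 + (2429578880)*p^5 + (404224000)*p^6 + (22700032)*p^7.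
Proof. coef_tac. Qed.

Lemma PL2_c2 (p:R) : pa <= p <= pb -> (364967144979267/1000) <= (74455341/8)*p^1 + (-314877977/2)*p^2 + (-695097587/2)*p^3 + (1355816800)*p^4 + (544099568)*p^5 + (72251648)*p^6 + (3056640)*p^7.
Proof. coef_tac. Qed.

Lemma PL2_c3 (p:R) : pa <= p <= pb -> (22390068795791/500) <= (21747613/16)*p^1 + (-93749339/4)*p^2 + (-197510159/4)*p^3 + (204557520)*p^4 + (64898136)*p^5 + (6449280)*p^6 + (182784)*p^7.
Proof. coef_tac. Qed.

Lemma PL2_c4 (p:R) : pa <= p <= pb -> (3268834127071/1000) <= (475587/4)*p^1 + (-8361443/4)*p^2 + (-4195657)*p^3 + (18476432)*p^4 + (4348256)*p^5 + (287488)*p^6 + (4096)*p^7.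
Proof. coef_tac. Qed.

Lemma PL2_c5 (p:R) : pa <= p <= pb -> (7101945243/50) <= (99669/16)*p^1 + (-223397/2)*p^2 + (-213181)*p^3 + (999136)*p^4 + (155168)*p^5 + (5120)*p^6.
Proof. coef_tac. Qed.

Lemma PL2_c6 (p:R) : pa <= p <= pb -> (851160791/250) <= (181)*p^1 + (-3311)*p^2 + (-5996)*p^3 + (29952)*p^4 + (2304)*p^5.
Proof. coef_tac. Qed.

Lemma PL2_c7 (p:R) : pa <= p <= pb -> (4345648/125) <= (9/4)*p^1 + (-42)*p^2 + (-72)*p^3 + (384)*p^4.
Proof. coef_tac. Qed.

Lemma PL2 (x p : R) : (10) <= x -> pa <= p <= pb -> 0 < Ql (x+2) p*(x+3+2*p)^2*x^4*(x+4*p+/2) - Ql x p*(x+1+2*p)^2*(x+2)^2*(x+2+4*p+/2)*(x+3)^2.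
Proof.
intros Hx Hp.
assert (Heq : Ql (x+2) p*(x+3+2*p)^2*x^4*(x+4*p+/2) - Ql x p*(x+1+2*p)^2*(x+2)^2*(x+2+4*p+/2)*(x+3)^2 = ((57417750)*p^1 + (-935652120)*p^2 + (-2257124520)*p^3 + (7825159680)*p^4 + (4514208000)*p^5 + (903475200)*p^6 + (63160320)*p^7)*(x - (10))^0 + ((35341995)*p^1 + (-586697372)*p^2 + (-1354893412)*p^3 + (4981203968)*p^4 + (2429578880)*p^5 + (404224000)*p^6 + (22700032)*p^7)*(x - (10))^1 + ((74455341/8)*p^1 + (-314877977/2)*p^2 + (-695097587/2)*p^3 + (1355816800)*p^4 + (544099568)*p^5 + (72251648)*p^6 + (3056640)*p^7)*(x - (10))^2 + ((21747613/16)*p^1 + (-93749339/4)*p^2 + (-197510159/4)*p^3 + (204557520)*p^4 + (64898136)*p^5 + (6449280)*p^6 + (182784)*p^7)*(x - (10))^3 + ((475587/4)*p^1 + (-8361443/4)*p^2 + (-4195657)*p^3 + (18476432)*p^4 + (4348256)*p^5 + (287488)*p^6 + (4096)*p^7)*(x - (10))^4 + ((99669/16)*p^1 + (-223397/2)*p^2 + (-213181)*p^3 + (999136)*p^4 + (155168)*p^5 + (5120)*p^6)*(x - (10))^5 + ((181)*p^1 + (-3311)*p^2 + (-5996)*p^3 + (29952)*p^4 + (2304)*p^5)*(x - (10))^6 + ((9/4)*p^1 + (-42)*p^2 + (-72)*p^3 + (384)*p^4)*(x - (10))^7) by (unfold Qu, Ql, cc1, dd; lra).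
rewrite Heq; clear Heq.
assert (Hm : 0 <= x - (10)) by lra.
set (m := x - (10)) in *. clearbody m.
pose proof (prod_lb _ _ m 0 (PL2_c0 p Hp) Hm).
pose proof (pow_le m 0 Hm).
pose proof (prod_lb _ _ m 1 (PL2_c1 p Hp) Hm).
pose proof (pow_le m 1 Hm).
pose proof (prod_lb _ _ m 2 (PL2_c2 p Hp) Hm).
pose proof (pow_le m 2 Hm).
pose proof (prod_lb _ _ m 3 (PL2_c3 p Hp) Hm).
pose proof (pow_le m 3 Hm).
pose proof (prod_lb _ _ m 4 (PL2_c4 p Hp) Hm).
pose proof (pow_le m 4 Hm).
pose proof (prod_lb _ _ m 5 (PL2_c5 p Hp) Hm).
pose proof (pow_le m 5 Hm).
pose proof (prod_lb _ _ m 6 (PL2_c6 p Hp) Hm).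
pose proof (pow_le m 6 Hm).
pose proof (prod_lb _ _ m 7 (PL2_c7 p Hp) Hm).
pose proof (pow_le m 7 Hm).
lra.
Qed.

Lemma PL3_c0 (p:R) : pa <= p <= pb -> (137706085653/1000) <= (44063525/4)*p^1 + (4157725)*p^2 + (-78275)*p^3 + (335000)*p^4 + (84000)*p^5 + (6400)*p^6.
Proof. coef_tac. Qed.

Lemma PL3_c1 (p:R) : pa <= p <= pb -> (13412428283/200) <= (51193315/8)*p^1 + (4038185/2)*p^2 + (-74465/2)*p^3 + (166100)*p^4 + (33200)*p^5 + (1920)*p^6.
Proof. coef_tac. Qed.

Lemma PL3_c2 (p:R) : pa <= p <= pb -> (12792974791/1000) <= (12384351/8)*p^1 + (392287)*p^2 + (-12581/2)*p^3 + (29580)*p^4 + (4080)*p^5 + (128)*p^6.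
Proof. coef_tac. Qed.

Lemma PL3_c3 (p:R) : pa <= p <= pb -> (1259485839/1000) <= (1596979/8)*p^1 + (76231/2)*p^2 + (-455)*p^3 + (2272)*p^4 + (160)*p^5.
Proof. coef_tac. Qed.

Lemma PL3_c4 (p:R) : pa <= p <= pb -> (69605349/1000) <= (115775/8)*p^1 + (1852)*p^2 + (-12)*p^3 + (64)*p^4.
Proof. coef_tac. Qed.

Lemma PL3_c5 (p:R) : pa <= p <= pb -> (2112241/1000) <= (2237/4)*p^1 + (36)*p^2.
Proof. coef_tac. Qed.

Lemma PL3_c6 (p:R) : pa <= p <= pb -> (14137/500) <= (9)*p^1.
Proof. coef_tac. Qed.

Lemma PL3 (x p : R) : (10) <= x -> pa <= p <= pb -> 0 < 2*p*x^5*(x+4*p+/2)*(x+1) - Ql x p*(x+1+2*p)^2*(x-5).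
Proof.
intros Hx Hp.
assert (Heq : 2*p*x^5*(x+4*p+/2)*(x+1) - Ql x p*(x+1+2*p)^2*(x-5) = ((44063525/4)*p^1 + (4157725)*p^2 + (-78275)*p^3 + (335000)*p^4 + (84000)*p^5 + (6400)*p^6)*(x - (10))^0 + ((51193315/8)*p^1 + (4038185/2)*p^2 + (-74465/2)*p^3 + (166100)*p^4 + (33200)*p^5 + (1920)*p^6)*(x - (10))^1 + ((12384351/8)*p^1 + (392287)*p^2 + (-12581/2)*p^3 + (29580)*p^4 + (4080)*p^5 + (128)*p^6)*(x - (10))^2 + ((1596979/8)*p^1 + (76231/2)*p^2 + (-455)*p^3 + (2272)*p^4 + (160)*p^5)*(x - (10))^3 + ((115775/8)*p^1 + (1852)*p^2 + (-12)*p^3 + (64)*p^4)*(x - (10))^4 + ((2237/4)*p^1 + (36)*p^2)*(x - (10))^5 + ((9)*p^1)*(x - (10))^6) by (unfold Qu, Ql, cc1, dd; lra).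
rewrite Heq; clear Heq.
assert (Hm : 0 <= x - (10)) by lra.
set (m := x - (10)) in *. clearbody m.
pose proof (prod_lb _ _ m 0 (PL3_c0 p Hp) Hm).
pose proof (pow_le m 0 Hm).
pose proof (prod_lb _ _ m 1 (PL3_c1 p Hp) Hm).
pose proof (pow_le m 1 Hm).
pose proof (prod_lb _ _ m 2 (PL3_c2 p Hp) Hm).
pose proof (pow_le m 2 Hm).
pose proof (prod_lb _ _ m 3 (PL3_c3 p Hp) Hm).
pose proof (pow_le m 3 Hm).
pose proof (prod_lb _ _ m 4 (PL3_c4 p Hp) Hm).
pose proof (pow_le m 4 Hm).
pose proof (prod_lb _ _ m 5 (PL3_c5 p Hp) Hm).
pose proof (pow_le m 5 Hm).
pose proof (prod_lb _ _ m 6 (PL3_c6 p Hp) Hm).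
pose proof (pow_le m 6 Hm).
lra.
Qed.

Lemma QlNeg1_c (p:R) : pa <= p <= pb -> (734653/250) <= (-13/8)*p^1 + (-5)*p^2 + (-4)*p^3 + (32)*p^4.
Proof. coef_tac. Qed.

Lemma QlNeg1 (p:R) : pa <= p <= pb -> Ql 1 p < 0.
Proof. intros Hp. pose proof (QlNeg1_c p Hp). unfold Ql, cc1. lra. Qed.

Lemma QlNeg2_c (p:R) : pa <= p <= pb -> (248319/40) <= (-123/4)*p^1 + (-18)*p^2 + (8)*p^3 + (64)*p^4.
Proof. coef_tac. Qed.

Lemma QlNeg2 (p:R) : pa <= p <= pb -> Ql 2 p < 0.
Proof. intros Hp. pose proof (QlNeg2_c p Hp). unfold Ql, cc1. lra. Qed.

Lemma QlNeg3_c (p:R) : pa <= p <= pb -> (2395473/250) <= (-1275/8)*p^1 + (-39)*p^2 + (36)*p^3 + (96)*p^4.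
Proof. coef_tac. Qed.

Lemma QlNeg3 (p:R) : pa <= p <= pb -> Ql 3 p < 0.
Proof. intros Hp. pose proof (QlNeg3_c p Hp). unfold Ql, cc1. lra. Qed.

Lemma QlNeg4_c (p:R) : pa <= p <= pb -> (6341687/500) <= (-1015/2)*p^1 + (-68)*p^2 + (80)*p^3 + (128)*p^4.
Proof. coef_tac. Qed.

Lemma QlNeg4 (p:R) : pa <= p <= pb -> Ql 4 p < 0.
Proof. intros Hp. pose proof (QlNeg4_c p Hp). unfold Ql, cc1. lra. Qed.

Lemma QlNeg5_c (p:R) : pa <= p <= pb -> (1873079/125) <= (-9945/8)*p^1 + (-105)*p^2 + (140)*p^3 + (160)*p^4.
Proof. coef_tac. Qed.

Lemma QlNeg5 (p:R) : pa <= p <= pb -> Ql 5 p < 0.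
Proof. intros Hp. pose proof (QlNeg5_c p Hp). unfold Ql, cc1. lra. Qed.

Lemma QlNeg6_c (p:R) : pa <= p <= pb -> (7903541/500) <= (-10329/4)*p^1 + (-150)*p^2 + (216)*p^3 + (192)*p^4.
Proof. coef_tac. Qed.

Lemma QlNeg6 (p:R) : pa <= p <= pb -> Ql 6 p < 0.
Proof. intros Hp. pose proof (QlNeg6_c p Hp). unfold Ql, cc1. lra. Qed.

Lemma QlNeg7_c (p:R) : pa <= p <= pb -> (2864269/200) <= (-38311/8)*p^1 + (-203)*p^2 + (308)*p^3 + (224)*p^4.
Proof. coef_tac. Qed.

Lemma QlNeg7 (p:R) : pa <= p <= pb -> Ql 7 p < 0.
Proof. intros Hp. pose proof (QlNeg7_c p Hp). unfold Ql, cc1. lra. Qed.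

Lemma QlNeg8_c (p:R) : pa <= p <= pb -> (4773621/500) <= (-8175)*p^1 + (-264)*p^2 + (416)*p^3 + (256)*p^4.
Proof. coef_tac. Qed.

Lemma QlNeg8 (p:R) : pa <= p <= pb -> Ql 8 p < 0.
Proof. intros Hp. pose proof (QlNeg8_c p Hp). unfold Ql, cc1. lra. Qed.

Lemma QlNeg9_c (p:R) : pa <= p <= pb -> (353801/1000) <= (-104805/8)*p^1 + (-333)*p^2 + (540)*p^3 + (288)*p^4.
Proof. coef_tac. Qed.

Lemma QlNeg9 (p:R) : pa <= p <= pb -> Ql 9 p < 0.
Proof. intros Hp. pose proof (QlNeg9_c p Hp). unfold Ql, cc1. lra. Qed.

Notation FA := (at_right 0).
Notation FB := (Rbar_locally p_infty).

Lemma FA_pos : FA (fun a => 0 < a).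
Proof. unfold at_right, within. apply filter_forall. auto. Qed.

Lemma FB_gt (M : R) : FB (fun b => M < b).
Proof. exists M. auto. Qed.

Lemma gen_ftc (F f : R -> R) (la lb : R) :
  (forall x, 0 < x -> is_derive F x (f x)) ->
  (forall x, 0 < x -> continuous f x) ->
  filterlim F FA (locally la) ->
  filterlim F FB (locally lb) ->
  is_RInt_gen f FA FB (lb - la).
Proof.
intros HD HC HA HB.
apply is_RInt_gen_ext with (Derive F).
- apply Filter_prod with (fun a => 0 < a) (fun b => 0 < b).
  + exact FA_pos.
  + exact (FB_gt 0).
  + intros a b Ha Hb x Hx. simpl in Hx.
    apply is_derive_unique. apply HD.
    assert (0 < Rmin a b) by (apply Rmin_glb_lt; auto). lra.
- apply is_RInt_gen_Derive.
  + apply Filter_prod with (fun a => 0 < a) (fun b => 0 < b).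
    * exact FA_pos.
    * exact (FB_gt 0).
    * intros a b Ha Hb x Hx. simpl in Hx.
      assert (0 < Rmin a b) by (apply Rmin_glb_lt; auto).
      eexists. apply HD. lra.
  + apply Filter_prod with (fun a => 0 < a) (fun b => 0 < b).
    * exact FA_pos.
    * exact (FB_gt 0).
    * intros a b Ha Hb x Hx. simpl in Hx.
      assert (0 < Rmin a b) by (apply Rmin_glb_lt; auto).
      apply continuous_ext_loc with f.
      -- assert (Hx0 : 0 < x) by lra.
         exists (mkposreal x Hx0). intros y Hy.
         apply sym_eq, is_derive_unique, HD.
         change (Rabs (y - x) < x) in Hy. apply Rabs_def2 in Hy. lra.
      -- apply HC. lra.
  + exact HA.
  + exact HB.
Qed.

Lemma gen_ge0 (g : R -> R) (l : R) :
  is_RInt_gen g FA FB l -> (forall x, 0 < x -> 0 <= g x) -> 0 <= l.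
Proof.
intros H Hg.
assert (Rabs l <= l).
{ refine (RInt_gen_norm (Fa:=FA) (Fb:=FB) g g l l _ _ H H).
  - apply Filter_prod with (fun a => 0 < a < 1) (fun b => 1 < b).
    + unfold at_right, within, locally. exists (mkposreal 1 Rlt_0_1). intros y Hy Hy0.
      change (Rabs (y - 0) < 1) in Hy. apply Rabs_def2 in Hy. simpl. lra.
    + exact (FB_gt 1).
    + intros a b Ha Hb. simpl. lra.
  - apply Filter_prod with (fun a => 0 < a) (fun b => 0 < b).
    + exact FA_pos.
    + exact (FB_gt 0).
    + intros a b Ha Hb x Hx. simpl in Hx.
      assert (0 <= g x) by (apply Hg; lra).
      unfold norm; simpl. unfold abs; simpl. rewrite Rabs_pos_eq; lra. }
pose proof (Rle_abs (-l)). rewrite Rabs_Ropp in H1. lra.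
Qed.
Lemma lim_right0 (g : R -> R) :
  (forall t, 0 < t < 1 -> Rabs (g t) <= t) -> filterlim g FA (locally 0).
Proof.
intros Hg. apply filterlim_locally. intros eps.
unfold at_right, within, locally.
assert (He : 0 < Rmin eps 1) by (apply Rmin_glb_lt; [apply cond_pos|lra]).
exists (mkposreal _ He). intros y Hy Hy0.
change (Rabs (y - 0) < Rmin eps 1) in Hy. apply Rabs_def2 in Hy.
pose proof (Rmin_l eps 1). pose proof (Rmin_r eps 1).
change (Rabs (g y - 0) < eps). rewrite Rminus_0_r.
assert (Rabs (g y) <= y) by (apply Hg; lra). lra.
Qed.

Lemma lim_inf0 (g : R -> R) (M C : R) :
  0 < M -> (forall t, M < t -> Rabs (g t) <= C / t) -> filterlim g FB (locally 0).
Proof.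
intros HM Hg. apply filterlim_locally. intros eps.
exists (Rmax M (Rabs C / eps)). intros t Ht.
change (Rabs (g t - 0) < eps). rewrite Rminus_0_r.
pose proof (Rmax_l M (Rabs C / eps)). pose proof (Rmax_r M (Rabs C / eps)).
pose proof (cond_pos eps) as Hep.
assert (Ht0 : 0 < t) by lra.
assert (H1 : Rabs (g t) <= C / t) by (apply Hg; lra).
assert (H2 : Rabs C / eps < t) by lra.
assert (H3 : C <= Rabs C) by apply Rle_abs.
assert (H4 : Rabs C < eps * t).
{ apply Rmult_lt_compat_r with (r := eps) in H2; auto.
  unfold Rdiv in H2. rewrite Rmult_assoc, Rinv_l in H2; lra. }
assert (C / t < eps).
{ apply Rmult_lt_reg_r with t; auto. unfold Rdiv. rewrite Rmult_assoc, Rinv_l; lra. }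
lra.
Qed.

Lemma rpow_deriv (s x : R) : 0 < x -> is_derive (fun t => Rpower t s) x (s * Rpower x (s-1)).
Proof. intros Hx. apply is_derive_Reals. apply derivable_pt_lim_power. auto. Qed.

Lemma rpow_cont (s x : R) : 0 < x -> continuous (fun t => Rpower t s) x.
Proof. intros Hx. apply (@ex_derive_continuous R_AbsRing R_NormedModule). eexists. apply rpow_deriv. auto. Qed.

Lemma integrand_cont (s x : R) : 0 < x -> continuous (fun t => Rpower t s * exp (- t)) x.
Proof.
intros Hx. apply (@continuous_mult R_UniformSpace R_AbsRing (fun t => Rpower t s) (fun t => exp (-t)) x).
- apply rpow_cont; auto.
- apply (@ex_derive_continuous R_AbsRing R_NormedModule). auto_derive. auto.
Qed.

Lemma exp_mono (x y : R) : x <= y -> exp x <= exp y.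
Proof. intros H. destruct (Rle_lt_or_eq_dec _ _ H) as [H1|H1].
- left. apply exp_increasing. auto.
- subst. lra. Qed.

Lemma rpow_le_t (s t : R) : 1 <= s -> 0 < t <= 1 -> Rpower t s <= t.
Proof.
intros Hs Ht. rewrite <- (Rpower_1 t) at 2 by lra. unfold Rpower.
apply exp_mono. assert (ln t <= 0) by (rewrite <- ln_1; apply ln_le; lra). nra.
Qed.

Lemma pow_le_fact_exp (t : R) (N : nat) : 0 <= t -> t ^ N <= INR (fact N) * exp t.
Proof.
intros Ht. pose proof (exp_ge_taylor t N Ht) as H.
assert (HN : 0 < INR (fact N)) by (apply lt_0_INR; apply lt_O_fact).
assert (t ^ N / INR (fact N) <= exp t).
{ eapply Rle_trans; [|exact H]. destruct N as [|n].
  - apply Req_le. reflexivity.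
  - replace (sum_f_R0 (fun k => t ^ k / INR (fact k)) (S n)) with (sum_f_R0 (fun k => t ^ k / INR (fact k)) n + t ^ (S n) / INR (fact (S n))) by reflexivity.
    assert (0 <= sum_f_R0 (fun k => t ^ k / INR (fact k)) n).
    { apply cond_pos_sum. intros k. apply Rmult_le_pos. apply pow_le; auto.
      left. apply Rinv_0_lt_compat. apply lt_0_INR, lt_O_fact. }
    lra. }
apply Rmult_le_compat_l with (r := INR (fact N)) in H0; [|lra].
unfold Rdiv in H0. rewrite <- Rmult_assoc, (Rmult_comm _ (t ^ N)), Rmult_assoc, Rinv_r in H0; lra.
Qed.

Lemma lim_inf_rpow (s : R) : 0 <= s ->
  filterlim (fun t => Rpower t s * exp (- t)) FB (locally 0).
Proof.
intros Hs. destruct (INR_unbounded (s + 1)) as [N HN].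
apply lim_inf0 with 1 (INR (fact N)); [lra|].
intros t Ht.
assert (Hpos : 0 < Rpower t s * exp (- t)).
{ apply Rmult_lt_0_compat; unfold Rpower; apply exp_pos. }
rewrite Rabs_pos_eq by lra.
assert (H1 : Rpower t (s + 1) <= Rpower t (INR N)) by (apply Rle_Rpower; lra).
rewrite Rpower_pow in H1 by lra. rewrite Rpower_plus, Rpower_1 in H1 by lra.
pose proof (pow_le_fact_exp t N ltac:(lra)) as H2.
rewrite exp_Ropp.
assert (Hexp : 0 < exp t) by apply exp_pos.
apply Rmult_le_reg_r with (t * exp t). nra.
unfold Rdiv. 
replace (Rpower t s * / exp t * (t * exp t)) with (Rpower t s * t) by (field; lra).
replace (INR (fact N) * / t * (t * exp t)) with (INR (fact N) * exp t) by (field; lra).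
lra.
Qed.

Lemma lim_right_rpow (s : R) : 1 <= s ->
  filterlim (fun t => Rpower t s * exp (- t)) FA (locally 0).
Proof.
intros Hs. apply lim_right0. intros t Ht.
assert (Hpos : 0 < Rpower t s * exp (- t)).
{ apply Rmult_lt_0_compat; unfold Rpower; apply exp_pos. }
rewrite Rabs_pos_eq by lra.
pose proof (rpow_le_t s t Hs ltac:(lra)).
assert (exp (- t) <= 1) by (rewrite <- exp_0; apply exp_mono; lra).
assert (0 < Rpower t s) by (unfold Rpower; apply exp_pos).
nra.
Qed.

Lemma lim_right_l (g : R -> R) (L : R) :
  (forall t, 0 < t < 1 -> Rabs (g t - L) <= t) -> filterlim g FA (locally L).
Proof.
intros Hg. apply filterlim_locally. intros eps.
unfold at_right, within, locally.
assert (He : 0 < Rmin eps 1) by (apply Rmin_glb_lt; [apply cond_pos|lra]).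
exists (mkposreal _ He). intros y Hy Hy0.
change (Rabs (y - 0) < Rmin eps 1) in Hy. apply Rabs_def2 in Hy.
pose proof (Rmin_l eps 1). pose proof (Rmin_r eps 1).
change (Rabs (g y - L) < eps).
assert (Rabs (g y - L) <= y) by (apply Hg; lra). simpl in *. lra.
Qed.

Lemma cont_lin (a b s1 s2 x : R) : 0 < x ->
  continuous (fun t => a * (Rpower t s1 * exp (- t)) + b * (Rpower t s2 * exp (- t))) x.
Proof.
intros Hx.
apply (@continuous_plus R_UniformSpace R_AbsRing R_NormedModule
   (fun t => a * (Rpower t s1 * exp (- t))) (fun t => b * (Rpower t s2 * exp (- t))) x).
- apply (@continuous_mult R_UniformSpace R_AbsRing (fun _ => a) (fun t => Rpower t s1 * exp (- t)) x).
  + apply continuous_const.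
  + apply integrand_cont; auto.
- apply (@continuous_mult R_UniformSpace R_AbsRing (fun _ => b) (fun t => Rpower t s2 * exp (- t)) x).
  + apply continuous_const.
  + apply integrand_cont; auto.
Qed.

Lemma lim_opp (g : R -> R) F {FF : Filter F} :
  filterlim g F (locally 0) -> filterlim (fun t => - g t) F (locally 0).
Proof.
intros H. eapply filterlim_comp; [exact H|].
pose proof (@filterlim_opp R_AbsRing R_NormedModule 0) as H1.
replace (locally 0) with (locally (opp (0:R_NormedModule))) at 2.
- exact H1.
- f_equal. apply (@opp_zero R_AbelianGroup).
Qed.

Lemma deriv_F (s x : R) (Hx : 0 < x) : is_derive (fun t => - (Rpower t s * exp (- t))) x (1 * (Rpower x s * exp (- x)) + (- s) * (Rpower x (s - 1) * exp (- x))).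
Proof.
    pose proof (rpow_deriv s x Hx) as D1.
    assert (D2 : is_derive (fun t => exp (- t)) x (- exp (- x))) by (auto_derive; [auto|ring]).
    pose proof (is_derive_opp _ _ _ (is_derive_mult _ _ _ _ _ D1 D2 Rmult_comm)) as D.
    simpl in D.
    assert (E : opp (plus (mult (s * Rpower x (s - 1)) (exp (- x))) (mult (Rpower x s) (- exp (- x)))) = 1 * (Rpower x s * exp (- x)) + - s * (Rpower x (s - 1) * exp (- x))).
    { change (-( s * Rpower x (s - 1) * exp (- x) + Rpower x s * (- exp (- x))) = 1 * (Rpower x s * exp (- x)) + - s * (Rpower x (s - 1) * exp (- x))). ring. }
    rewrite <- E.
    apply is_derive_ext with (fun x => opp (mult (Rpower x s) (exp (- x)))).
    - intros t. reflexivity.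
    - exact D.
Qed.

Lemma gamma_rec (s l : R) : 1 <= s ->
  is_RInt_gen (fun t => Rpower t (s - 1) * exp (- t)) FA FB l ->
  is_RInt_gen (fun t => Rpower t (s + 1 - 1) * exp (- t)) FA FB (s * l).
Proof.
intros Hs Hl.
set (h := fun t => 1 * (Rpower t s * exp (- t)) + (- s) * (Rpower t (s - 1) * exp (- t))).
assert (Hh : is_RInt_gen h FA FB (0 - 0)).
{ apply gen_ftc with (F := fun t => - (Rpower t s * exp (- t))).
  - intros x Hx. apply deriv_F; auto.
  - intros x Hx. apply cont_lin; auto.
  - apply (lim_opp _ FA (FF := @filter_filter _ _ (at_right_proper_filter 0)) (lim_right_rpow s Hs)).
  - apply (lim_opp _ FB (FF := @filter_filter _ _ (Rbar_locally_filter p_infty)) (lim_inf_rpow s ltac:(lra))). }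
pose proof (is_RInt_gen_plus _ _ _ _ Hh (is_RInt_gen_scal _ s _ Hl)) as H.
apply is_RInt_gen_ext with (fun t => plus (h t) (scal s (Rpower t (s - 1) * exp (- t)))).
- apply filter_forall. intros [a b] x _.
  replace (s + 1 - 1) with s by ring.
  change (h x + s * (Rpower x (s - 1) * exp (- x)) = Rpower x s * exp (- x)).
  unfold h. ring.
- replace (s * l) with (plus (0 - 0) (scal s l)).
  + exact H.
  + change (0 - 0 + s * l = s * l). ring.
Qed.

Lemma ext_pos (f g : R -> R) (l : R) :
  (forall x, 0 < x -> f x = g x) -> is_RInt_gen f FA FB l -> is_RInt_gen g FA FB l.
Proof.
intros He H. apply is_RInt_gen_ext with f; auto.
apply Filter_prod with (fun a => 0 < a) (fun b => 0 < b).
- exact FA_pos.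
- exact (FB_gt 0).
- intros a b Ha Hb x Hx. simpl in Hx.
  assert (0 < Rmin a b) by (apply Rmin_glb_lt; auto). apply He. lra.
Qed.

Lemma exp_cont (x : R) : continuous (fun t => exp (- t)) x.
Proof. apply (@ex_derive_continuous R_AbsRing R_NormedModule). auto_derive. auto. Qed.

Lemma gamma_1 : is_RInt_gen (fun t => Rpower t (1 - 1) * exp (- t)) FA FB 1.
Proof.
assert (H : is_RInt_gen (fun t => exp (- t)) FA FB (0 - - 1)).
{ apply gen_ftc with (F := fun t => - exp (- t)).
  - intros x Hx. auto_derive; auto. ring.
  - intros x Hx. apply exp_cont.
  - apply lim_right_l. intros t Ht.
    assert (exp (- t) <= 1) by (rewrite <- exp_0; apply exp_mono; lra).
    pose proof (exp_ineq1_le (- t)).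
    rewrite Rabs_pos_eq; lra.
  - apply lim_inf0 with 1 1; [lra|]. intros t Ht.
    pose proof (exp_ineq1_le t). pose proof (exp_pos t).
    rewrite Rabs_Ropp, Rabs_pos_eq by (left; apply exp_pos).
    rewrite exp_Ropp. unfold Rdiv. rewrite Rmult_1_l. apply Rinv_le_contravar; lra. }
assert (E : 0 - - 1 = 1) by ring. rewrite E in H.
apply ext_pos with (fun t => exp (- t)); auto.
intros x Hx. replace (1 - 1) with 0 by ring. rewrite Rpower_O by auto. ring.
Qed.

Definition gh (u : R) := sqrt u * exp (- u).

Lemma gh_cont (x : R) : continuous gh x.
Proof.
apply (@continuous_mult R_UniformSpace R_AbsRing sqrt (fun t => exp (- t)) x).
- apply continuous_sqrt.
- apply exp_cont.
Qed.

Lemma gh_ex (a b : R) : ex_RInt gh a b.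
Proof. apply (@ex_RInt_continuous R_CompleteNormedModule). intros. apply gh_cont. Qed.

Definition GH (t : R) := RInt gh 0 t.

Lemma GH_deriv (x : R) : is_derive GH x (gh x).
Proof.
apply is_derive_RInt with 0.
- apply filter_forall. intros b. apply RInt_correct. apply gh_ex.
- apply gh_cont.
Qed.

Lemma gh_nonneg (u : R) : 0 <= gh u.
Proof. unfold gh. apply Rmult_le_pos. apply sqrt_pos. left; apply exp_pos. Qed.

Lemma GH_mono (a b : R) : a <= b -> GH a <= GH b.
Proof.
intros Hab. unfold GH.
rewrite <- (RInt_Chasles gh 0 a b) by apply gh_ex.
assert (0 <= RInt gh a b) by (apply RInt_ge_0; auto; [apply gh_ex| intros; apply gh_nonneg]).
change (RInt gh 0 a <= RInt gh 0 a + RInt gh a b). lra.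
Qed.

Lemma GH_bound (t : R) : 0 <= t -> GH t <= 2.
Proof.
intros Ht.
set (k := fun u => (1 + u) * exp (- u)).
assert (Hk : is_RInt k 0 t (minus ((fun u => - ((2 + u) * exp (- u))) t) ((fun u => - ((2 + u) * exp (- u))) 0))).
{ apply (@is_RInt_derive R_CompleteNormedModule (fun u => - ((2 + u) * exp (- u))) k).
  - intros x _. unfold k. auto_derive; auto. ring.
  - intros x _. unfold k. apply (@ex_derive_continuous R_AbsRing R_NormedModule). auto_derive. auto. }
assert (Ek : ex_RInt k 0 t) by (eexists; exact Hk).
assert (RInt gh 0 t <= RInt k 0 t).
{ apply RInt_le; auto. apply gh_ex. intros x Hx. unfold gh, k.
  pose proof (exp_pos (- x)).
  assert (sqrt x <= 1 + x).
  { pose proof (sqrt_pos x). pose proof (sqrt_sqrt x ltac:(lra)). nra. }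
  nra. }
rewrite (is_RInt_unique _ _ _ _ Hk) in H.
change (GH t <= - ((2 + t) * exp (- t)) - - ((2 + 0) * exp (- 0))) in H.
rewrite Ropp_0, exp_0 in H. pose proof (exp_pos (- t)). nra.
Qed.

Lemma GH_lim : exists l, filterlim GH FB (locally l).
Proof.
set (E := fun y => exists t, 0 <= t /\ y = GH t).
assert (HE : bound E) by (exists 2; intros y [t [Ht ->]]; apply GH_bound; auto).
assert (HE2 : exists x, E x) by (exists (GH 0); exists 0; split; [lra|auto]).
destruct (completeness E HE HE2) as [l [Hub Hlub]].
exists l. apply filterlim_locally. intros eps.
destruct (Classical_Prop.classic (exists t, 0 <= t /\ l - eps < GH t)) as [[t0 [Ht0 Hlt]]|Hno].
- exists t0. intros t Ht.
  change (Rabs (GH t - l) < eps).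
  assert (GH t0 <= GH t) by (apply GH_mono; lra).
  assert (GH t <= l) by (apply Hub; exists t; split; [lra|auto]).
  pose proof (cond_pos eps). apply Rabs_def1; lra.
- exfalso. assert (l <= l - eps).
  { apply Hlub. intros y [t [Ht ->]].
    destruct (Rle_or_lt (GH t) (l - eps)); auto. exfalso. apply Hno. exists t; split; auto. }
  pose proof (cond_pos eps). lra.
Qed.

Lemma gamma_32 : exists l, is_RInt_gen (fun t => Rpower t (3/2 - 1) * exp (- t)) FA FB l.
Proof.
destruct GH_lim as [l Hl].
exists (l - 0).
apply ext_pos with gh.
- intros x Hx. unfold gh. replace (3/2 - 1) with (/2) by field. rewrite Rpower_sqrt; auto.
- apply gen_ftc with GH.
  + intros x _. apply GH_deriv.
  + intros x _. apply gh_cont.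
  + apply lim_right_l. intros t Ht.
    unfold GH. rewrite Rminus_0_r.
    assert (Rabs (RInt gh 0 t) <= (t - 0) * 1).
    { apply abs_RInt_le_const; [lra|apply gh_ex|].
      intros u Hu. unfold gh. pose proof (exp_pos (- u)).
      assert (exp (- u) <= 1) by (rewrite <- exp_0; apply exp_mono; lra).
      assert (sqrt u <= 1).
      { rewrite <- sqrt_1. apply sqrt_le_1_alt. lra. }
      pose proof (sqrt_pos u).
      rewrite Rabs_pos_eq by nra. nra. }
    lra.
  + exact Hl.
Qed.

Lemma rpow_pos (x y : R) : 0 < Rpower x y.
Proof. unfold Rpower. apply exp_pos. Qed.

Lemma gamma_cs (s l1 lm l2 : R) : 1 <= s ->
  is_RInt_gen (fun t => Rpower t (s - 1) * exp (- t)) FA FB l1 ->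
  is_RInt_gen (fun t => Rpower t (s + /2 - 1) * exp (- t)) FA FB lm ->
  is_RInt_gen (fun t => Rpower t (s + 1 - 1) * exp (- t)) FA FB l2 ->
  lm^2 <= l1 * l2.
Proof.
intros Hs H1 Hm H2.
assert (Hq : forall lam, 0 <= lam^2 * l1 + 2*lam*lm + l2).
{ intros lam.
  pose proof (is_RInt_gen_plus _ _ _ _ (is_RInt_gen_plus _ _ _ _ (is_RInt_gen_scal _ (lam^2) _ H1) (is_RInt_gen_scal _ (2*lam) _ Hm)) H2) as H.
  change (0 <= plus (plus (scal (lam^2) l1) (scal (2*lam) lm)) l2).
  apply (gen_ge0 _ _ H). intros x Hx.
  change (0 <= lam^2 * (Rpower x (s-1) * exp(-x)) + 2*lam*(Rpower x (s+/2-1)*exp(-x)) + Rpower x (s+1-1)*exp(-x)).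
  replace (s + /2 - 1) with ((s - 1) + /2) by field.
  replace (s + 1 - 1) with ((s - 1) + /2 + /2) by field.
  rewrite !Rpower_plus.
  pose proof (rpow_pos x (s - 1)). pose proof (exp_pos (- x)).
  set (a := Rpower x (s - 1)) in *. set (b := Rpower x (/2)). set (e := exp (- x)) in *.
  assert (0 <= a * e * (lam + b)^2).
  { apply Rmult_le_pos. apply Rmult_le_pos; lra. apply pow2_ge_0. }
  assert (E : lam^2*(a*e) + 2*lam*(a*b*e) + a*b*b*e = a*e*(lam+b)^2) by ring.
  clear H. lra. }
assert (Hl1 : 0 <= l1).
{ apply (gen_ge0 _ _ H1). intros x Hx. left. apply Rmult_lt_0_compat. apply rpow_pos. apply exp_pos. }
clear H1 Hm H2.
destruct (Rle_lt_or_eq_dec _ _ Hl1) as [Hp|Hz].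
- specialize (Hq (- lm / l1)).
  assert (E : (- lm / l1)^2 * l1 + 2 * (- lm / l1) * lm + l2 = l2 - lm^2 / l1) by (field; lra).
  rewrite E in Hq.
  assert (lm^2 / l1 <= l2) by lra.
  apply Rmult_le_compat_l with (r := l1) in H; [|lra].
  replace (l1 * (lm^2 / l1)) with (lm^2) in H by (field; lra). lra.
- subst l1. destruct (Req_dec lm 0) as [->|Hne].
  + lra.
  + exfalso. specialize (Hq (- (Rabs l2 + 1) / (2 * lm))).
    replace ((- (Rabs l2 + 1) / (2 * lm))^2 * 0 + 2 * (- (Rabs l2 + 1) / (2 * lm)) * lm + l2)
      with (l2 - (Rabs l2 + 1)) in Hq by (field; auto).
    pose proof (Rle_abs l2). lra.
Qed.

Definition Gk (k : nat) := Gamma (INR k / 2 + 1).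

Lemma gamma_ex (k : nat) : exists l, is_RInt_gen (fun t => Rpower t (INR k / 2 + 1 - 1) * exp (- t)) FA FB l.
Proof.
assert (forall k, (exists l, is_RInt_gen (fun t => Rpower t (INR k / 2 + 1 - 1) * exp (- t)) FA FB l) /\
                  (exists l, is_RInt_gen (fun t => Rpower t (INR (S k) / 2 + 1 - 1) * exp (- t)) FA FB l)).
{ clear k. intros k. induction k as [|k IH].
  - split.
    + exists 1. replace (INR 0 / 2 + 1) with 1 by (simpl; field). exact gamma_1.
    + destruct gamma_32 as [l Hl]. exists l. replace (INR 1 / 2 + 1) with (3/2) by (simpl; field). exact Hl.
  - destruct IH as [IH1 IH2]. split; [exact IH2|].
    destruct IH1 as [l Hl]. exists ((INR k / 2 + 1) * l).
    replace (INR (S (S k)) / 2 + 1) with (INR k / 2 + 1 + 1) by (rewrite !S_INR; field).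
    apply gamma_rec; [pose proof (pos_INR k); lra | exact Hl]. }
exact (proj1 (H k)).
Qed.

Lemma uniq_gamma (s l : R) : is_RInt_gen (fun t => Rpower t (s - 1) * exp (- t)) FA FB l -> Gamma s = l.
Proof.
intros H. unfold Gamma.
exact (@is_RInt_gen_unique R_CompleteNormedModule FA FB (Proper_StrongProper _ (at_right_proper_filter 0)) (Proper_StrongProper _ (Rbar_locally_filter p_infty)) _ l H).
Qed.

Lemma gamma_is (k : nat) : is_RInt_gen (fun t => Rpower t (INR k / 2 + 1 - 1) * exp (- t)) FA FB (Gk k).
Proof.
destruct (gamma_ex k) as [l Hl].
replace (Gk k) with l; [exact Hl|].
unfold Gk. symmetry. apply uniq_gamma. exact Hl.
Qed.

Lemma Gk_rec (k : nat) : Gk (S (S k)) = (INR k / 2 + 1) * Gk k.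
Proof.
unfold Gk at 1. apply uniq_gamma.
replace (INR (S (S k)) / 2 + 1) with (INR k / 2 + 1 + 1) by (rewrite !S_INR; field).
apply gamma_rec. pose proof (pos_INR k). lra. apply gamma_is.
Qed.

Lemma Gk_cs (k : nat) : Gk (S k) ^ 2 <= Gk k * Gk (S (S k)).
Proof.
apply (gamma_cs (INR k / 2 + 1)).
- pose proof (pos_INR k). lra.
- apply gamma_is.
- replace (INR k / 2 + 1 + /2) with (INR (S k) / 2 + 1) by (rewrite !S_INR; field). apply gamma_is.
- replace (INR k / 2 + 1 + 1) with (INR (S (S k)) / 2 + 1) by (rewrite !S_INR; field). apply gamma_is.
Qed.

Lemma Gk_nonneg (k : nat) : 0 <= Gk k.
Proof.
apply (gen_ge0 _ _ (gamma_is k)). intros x Hx. left. apply Rmult_lt_0_compat. apply rpow_pos. apply exp_pos.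
Qed.

Lemma Gk0 : Gk 0 = 1.
Proof. unfold Gk. apply uniq_gamma. replace (INR 0 / 2 + 1) with 1 by (simpl; field). exact gamma_1. Qed.

Lemma Gk_pos (k : nat) : 0 < Gk k.
Proof.
assert (H1 : 0 < Gk 1).
{ pose proof (Gk_cs 1) as H. rewrite (Gk_rec 1) in H.
  assert (E : Gk 2 = 1) by (rewrite (Gk_rec 0), Gk0; simpl; field).
  rewrite E in H. pose proof (Gk_nonneg 1).
  destruct (Rle_lt_or_eq_dec _ _ H0) as [Hlt|He]; [exact Hlt|].
  rewrite <- He in H. simpl in H. lra. }
assert (forall k, 0 < Gk k /\ 0 < Gk (S k)).
{ clear k. intros k. induction k as [|k [IH1 IH2]].
  - split; [rewrite Gk0; lra | exact H1].
  - split; [exact IH2|]. rewrite Gk_rec. apply Rmult_lt_0_compat; [pose proof (pos_INR k); lra | exact IH1]. }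
exact (proj1 (H k)).
Qed.

Lemma lim_le1 (a C : R) (n0 : nat) : 0 <= C -> (1 <= n0)%nat ->
  (forall k, a <= 1 + C / INR (n0 + 2 * k)) -> a <= 1.
Proof.
intros HC Hn0 H.
destruct (Rle_or_lt a 1) as [|Ha]; [assumption|exfalso].
set (d := a - 1).
assert (Hd : 0 < d) by (unfold d; lra).
destruct (INR_unbounded (C / d)) as [k Hk].
specialize (H k).
assert (Hpos : 0 < INR (n0 + 2 * k)) by (apply lt_0_INR; lia).
assert (Hge : INR k <= INR (n0 + 2 * k)) by (apply le_INR; lia).
assert (C / INR (n0 + 2 * k) < d).
{ apply Rmult_lt_reg_r with (INR (n0 + 2 * k)); auto.
  unfold Rdiv. rewrite Rmult_assoc, Rinv_l by lra.
  assert (C < d * INR k).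
  { apply Rmult_lt_reg_r with (/ d). apply Rinv_0_lt_compat; auto.
    replace (d * INR k * / d) with (INR k) by (field; lra). unfold Rdiv in Hk. lra. }
  nra. }
unfold d in *. lra.
Qed.

Lemma up_abs (y U : nat -> R) (C : R) : 0 <= C ->
  (forall n, (1 <= n)%nat -> 0 < y n) ->
  (forall n, (1 <= n)%nat -> 0 < U n) ->
  (forall n, (1 <= n)%nat -> y (S (S n)) * (INR n + 2)^2 = y n * (INR n + 1)^2) ->
  (forall n, (1 <= n)%nat -> U (S (S n)) * (INR n + 2)^2 < U n * (INR n + 1)^2) ->
  (forall n, (2 <= n)%nat -> y n <= U n * (1 + C / INR n)) ->
  forall n, (1 <= n)%nat -> y n < U n.
Proof.
intros HC Hy HU Hrec Hmono Hlim.
set (q := fun n => y n / U n).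
assert (Hstep : forall n, (1 <= n)%nat -> q n < q (S (S n))).
{ intros n Hn. unfold q.
  pose proof (Hy n Hn). pose proof (HU n Hn).
  pose proof (Hy (S (S n)) ltac:(lia)). pose proof (HU (S (S n)) ltac:(lia)).
  pose proof (Hrec n Hn). pose proof (Hmono n Hn).
  assert (h1 : 0 < INR n + 1) by (pose proof (pos_INR n); lra).
  assert (h2 : 0 < INR n + 2) by (pose proof (pos_INR n); lra).
  apply Rmult_lt_reg_r with (U n * U (S (S n)) * (INR n + 1)^2). 
  { apply Rmult_lt_0_compat; [nra|]. apply pow_lt. lra. }
  replace (y n / U n * (U n * U (S (S n)) * (INR n + 1) ^ 2)) with (y n * (INR n + 1)^2 * U (S (S n))) by (field; lra).
  replace (y (S (S n)) / U (S (S n)) * (U n * U (S (S n)) * (INR n + 1) ^ 2)) with (y (S (S n)) * (U n * (INR n + 1)^2)) by (field; lra).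
  rewrite <- H3.
  replace (y (S (S n)) * (INR n + 2) ^ 2 * U (S (S n))) with (y (S (S n)) * (U (S (S n)) * (INR n + 2) ^ 2)) by ring.
  apply Rmult_lt_compat_l; auto. }
assert (Hmon : forall n k, (1 <= n)%nat -> q n <= q (n + 2 * k)%nat).
{ intros n k Hn. induction k as [|k IH].
  - replace (n + 2 * 0)%nat with n by lia. lra.
  - replace (n + 2 * S k)%nat with (S (S (n + 2 * k))) by lia.
    pose proof (Hstep (n + 2 * k)%nat ltac:(lia)). lra. }
intros n Hn.
assert (Hq2 : q (S (S n)) <= 1).
{ apply (lim_le1 _ C (S (S n))); auto; try lia.
  intros k. eapply Rle_trans; [apply (Hmon (S (S n)) k); lia|].
  unfold q. pose proof (HU (S (S n) + 2 * k)%nat ltac:(lia)).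
  pose proof (Hlim (S (S n) + 2 * k)%nat ltac:(lia)).
  apply Rmult_le_reg_r with (U (S (S n) + 2 * k)%nat); auto.
  unfold Rdiv at 1. rewrite Rmult_assoc, Rinv_l by lra. lra. }
pose proof (Hstep n Hn). unfold q in *.
pose proof (HU n Hn).
assert (y n / U n < 1) by lra.
apply Rmult_lt_reg_r with (/ U n). apply Rinv_0_lt_compat; auto.
rewrite Rinv_r by lra. exact H1.
Qed.

Lemma lo_abs (y L : nat -> R) (C : R) (N0 : nat) : 0 <= C -> (1 <= N0)%nat ->
  (forall n, (N0 <= n)%nat -> 0 < y n) ->
  (forall n, (N0 <= n)%nat -> 0 < L n) ->
  (forall n, (N0 <= n)%nat -> y (S (S n)) * (INR n + 2)^2 = y n * (INR n + 1)^2) ->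
  (forall n, (N0 <= n)%nat -> L n * (INR n + 1)^2 < L (S (S n)) * (INR n + 2)^2) ->
  (forall n, (N0 <= n)%nat -> L n * (1 - C / INR n) <= y n) ->
  forall n, (N0 <= n)%nat -> L n < y n.
Proof.
intros HC HN0 Hy HL Hrec Hmono Hlim.
set (q := fun n => y n / L n).
assert (Hstep : forall n, (N0 <= n)%nat -> q (S (S n)) < q n).
{ intros n Hn. unfold q.
  pose proof (Hy n Hn). pose proof (HL n Hn).
  pose proof (Hy (S (S n)) ltac:(lia)). pose proof (HL (S (S n)) ltac:(lia)).
  pose proof (Hrec n Hn). pose proof (Hmono n Hn).
  assert (h1 : 0 < INR n + 1) by (pose proof (pos_INR n); lra).
  assert (h2 : 0 < INR n + 2) by (pose proof (pos_INR n); lra).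
  apply Rmult_lt_reg_r with (L n * L (S (S n)) * (INR n + 1)^2). 
  { apply Rmult_lt_0_compat; [nra|]. apply pow_lt. lra. }
  replace (y n / L n * (L n * L (S (S n)) * (INR n + 1) ^ 2)) with (y n * (INR n + 1)^2 * L (S (S n))) by (field; lra).
  replace (y (S (S n)) / L (S (S n)) * (L n * L (S (S n)) * (INR n + 1) ^ 2)) with (y (S (S n)) * (L n * (INR n + 1)^2)) by (field; lra).
  rewrite <- H3.
  replace (y (S (S n)) * (INR n + 2) ^ 2 * L (S (S n))) with (y (S (S n)) * (L (S (S n)) * (INR n + 2) ^ 2)) by ring.
  apply Rmult_lt_compat_l; auto. }
assert (Hmon : forall n k, (N0 <= n)%nat -> q (n + 2 * k)%nat <= q n).
{ intros n k Hn. induction k as [|k IH].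
  - replace (n + 2 * 0)%nat with n by lia. lra.
  - replace (n + 2 * S k)%nat with (S (S (n + 2 * k))) by lia.
    pose proof (Hstep (n + 2 * k)%nat ltac:(lia)). lra. }
intros n Hn.
assert (Hq2 : 1 <= q (S (S n))).
{ assert (2 - q (S (S n)) <= 1); [|lra].
  apply (lim_le1 _ C (S (S n))); auto; try lia.
  intros k. pose proof (Hmon (S (S n)) k ltac:(lia)).
  assert (1 - C / INR (S (S n) + 2 * k) <= q (S (S n) + 2 * k)%nat); [|lra].
  unfold q. pose proof (HL (S (S n) + 2 * k)%nat ltac:(lia)).
  pose proof (Hlim (S (S n) + 2 * k)%nat ltac:(lia)).
  apply Rmult_le_reg_r with (L (S (S n) + 2 * k)%nat); auto.
  unfold Rdiv at 2. rewrite Rmult_assoc, Rinv_l by lra. lra. }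
pose proof (Hstep n Hn). unfold q in *.
pose proof (HL n Hn).
assert (1 < y n / L n) by lra.
apply Rmult_lt_reg_r with (/ L n). apply Rinv_0_lt_compat; auto.
rewrite Rinv_r by lra. exact H1.
Qed.

Definition Uf (x p : R) := Qu x p * (x+1+2*p)^2 / (p * x^4 * (x+4*p+/2) * (x+1)^2).
Definition Lf (x p : R) := Ql x p * (x+1+2*p)^2 / (p * x^4 * (x+4*p+/2) * (x+1)^2).

Lemma den_pos (x p : R) : 1 <= x -> pa <= p <= pb -> 0 < p * x^4 * (x+4*p+/2) * (x+1)^2.
Proof.
intros Hx Hp.
repeat apply Rmult_lt_0_compat; try lra; apply pow_lt; lra.
Qed.

Lemma Uf_pos (x p : R) : 1 <= x -> pa <= p <= pb -> 0 < Uf x p.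
Proof.
intros Hx Hp. unfold Uf. apply Rdiv_lt_0_compat.
- apply Rmult_lt_0_compat. apply PU1; auto. apply pow_lt; lra.
- apply den_pos; auto.
Qed.

Lemma Lf_pos (x p : R) : 10 <= x -> pa <= p <= pb -> 0 < Lf x p.
Proof.
intros Hx Hp. unfold Lf. apply Rdiv_lt_0_compat.
- apply Rmult_lt_0_compat. apply PL1; auto. apply pow_lt; lra.
- apply den_pos; auto; lra.
Qed.

Lemma Uf_mono (x p : R) : 1 <= x -> pa <= p <= pb ->
  Uf (x+2) p * (x+2)^2 < Uf x p * (x+1)^2.
Proof.
intros Hx Hp.
pose proof (PU2 x p Hx Hp) as H.
set (D := p * x^4 * (x+4*p+/2) * (x+2)^2 * (x+2+4*p+/2) * (x+3)^2).
assert (HD : 0 < D) by (unfold D; repeat apply Rmult_lt_0_compat; try lra; apply pow_lt; lra).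
assert (E : Uf x p * (x+1)^2 - Uf (x+2) p * (x+2)^2 =
  (Qu x p*(x+1+2*p)^2*(x+2)^2*(x+2+4*p+/2)*(x+3)^2 - Qu (x+2) p*(x+3+2*p)^2*x^4*(x+4*p+/2)) / D).
{ unfold Uf, D. field. repeat split; lra. }
assert (0 < (Qu x p*(x+1+2*p)^2*(x+2)^2*(x+2+4*p+/2)*(x+3)^2 - Qu (x+2) p*(x+3+2*p)^2*x^4*(x+4*p+/2)) / D)
  by (apply Rdiv_lt_0_compat; auto).
lra.
Qed.

Lemma Lf_mono (x p : R) : 10 <= x -> pa <= p <= pb ->
  Lf x p * (x+1)^2 < Lf (x+2) p * (x+2)^2.
Proof.
intros Hx Hp.
pose proof (PL2 x p Hx Hp) as H.
set (D := p * x^4 * (x+4*p+/2) * (x+2)^2 * (x+2+4*p+/2) * (x+3)^2).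
assert (HD : 0 < D) by (unfold D; repeat apply Rmult_lt_0_compat; try lra; apply pow_lt; lra).
assert (E : Lf (x+2) p * (x+2)^2 - Lf x p * (x+1)^2 =
  (Ql (x+2) p*(x+3+2*p)^2*x^4*(x+4*p+/2) - Ql x p*(x+1+2*p)^2*(x+2)^2*(x+2+4*p+/2)*(x+3)^2) / D).
{ unfold Lf, D. field. repeat split; lra. }
assert (0 < (Ql (x+2) p*(x+3+2*p)^2*x^4*(x+4*p+/2) - Ql x p*(x+1+2*p)^2*(x+2)^2*(x+2+4*p+/2)*(x+3)^2) / D)
  by (apply Rdiv_lt_0_compat; auto).
lra.
Qed.

Lemma Uf_lim (x p : R) : 1 <= x -> pa <= p <= pb -> 2 / x <= Uf x p * (1 + 5 / x).
Proof.
intros Hx Hp.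
pose proof (PU3 x p Hx Hp) as H.
set (D := p * x^5 * (x+4*p+/2) * (x+1)^2).
assert (HD : 0 < D) by (unfold D; repeat apply Rmult_lt_0_compat; try lra; apply pow_lt; lra).
assert (E : Uf x p * (1 + 5 / x) - 2 / x =
  (Qu x p*(x+1+2*p)^2*(x+5) - 2*p*x^4*(x+4*p+/2)*(x+1)^2) / D).
{ unfold Uf, D. field. repeat split; lra. }
assert (0 < (Qu x p*(x+1+2*p)^2*(x+5) - 2*p*x^4*(x+4*p+/2)*(x+1)^2) / D)
  by (apply Rdiv_lt_0_compat; auto).
lra.
Qed.

Lemma Lf_lim (x p : R) : 10 <= x -> pa <= p <= pb -> Lf x p * (1 - 5 / x) <= 2 / (x + 1).
Proof.
intros Hx Hp.
pose proof (PL3 x p Hx Hp) as H.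
set (D := p * x^5 * (x+4*p+/2) * (x+1)^2).
assert (HD : 0 < D) by (unfold D; repeat apply Rmult_lt_0_compat; try lra; apply pow_lt; lra).
assert (E : 2 / (x + 1) - Lf x p * (1 - 5 / x) =
  (2*p*x^5*(x+4*p+/2)*(x+1) - Ql x p*(x+1+2*p)^2*(x-5)) / D).
{ unfold Lf, D. field. repeat split; lra. }
assert (0 < (2*p*x^5*(x+4*p+/2)*(x+1) - Ql x p*(x+1+2*p)^2*(x-5)) / D)
  by (apply Rdiv_lt_0_compat; auto).
lra.
Qed.

Lemma PI_bounds : pa <= PI <= pb.
Proof.
pose proof (PI_2_3_7_ineq 4) as H.
unfold sum_f_R0, tg_alt, PI_2_3_7_tg, Ratan_seq in H. simpl in H.
lra.
Qed.

Definition yy (n : nat) := (Gk (pred n) / Gk n)^2.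

Lemma yy_pos (n : nat) : 0 < yy n.
Proof.
unfold yy. pose proof (Gk_pos (pred n)). pose proof (Gk_pos n).
apply pow_lt. apply Rdiv_lt_0_compat; auto.
Qed.

Lemma yy_rec (n : nat) : (1 <= n)%nat -> yy (S (S n)) * (INR n + 2)^2 = yy n * (INR n + 1)^2.
Proof.
intros Hn. destruct n as [|k]; [lia|].
unfold yy. simpl pred.
rewrite (Gk_rec k), (Gk_rec (S k)).
pose proof (Gk_pos k). pose proof (Gk_pos (S k)).
rewrite !S_INR. pose proof (pos_INR k).
field. lra.
Qed.

Lemma yy_up (n : nat) : (2 <= n)%nat -> yy n <= 2 / INR n.
Proof.
intros Hn. destruct n as [|k]; [lia|]. destruct k as [|j]; [lia|].
unfold yy. simpl pred.
pose proof (Gk_cs j) as H. pose proof (Gk_rec j) as E.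
pose proof (Gk_pos j). pose proof (Gk_pos (S j)). pose proof (Gk_pos (S (S j))).
pose proof (pos_INR j).
assert (Ej : Gk j = 2 * Gk (S (S j)) / (INR j + 2)) by (rewrite E; field; lra).
rewrite Ej in H.
rewrite !S_INR.
assert (Hg : Gk (S j) ^ 2 <= 2 / (INR j + 2) * Gk (S (S j)) ^ 2).
{ replace (2 / (INR j + 2) * Gk (S (S j)) ^ 2) with (2 * Gk (S (S j)) / (INR j + 2) * Gk (S (S j))) by (field; lra). exact H. }
replace ((Gk (S j) / Gk (S (S j))) ^ 2) with (Gk (S j) ^ 2 / Gk (S (S j)) ^ 2) by (field; lra).
apply Rmult_le_reg_r with (Gk (S (S j)) ^ 2). apply pow_lt; lra.
replace (Gk (S j) ^ 2 / Gk (S (S j)) ^ 2 * Gk (S (S j)) ^ 2) with (Gk (S j) ^ 2) by (field; lra).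
replace (2 / (INR j + 1 + 1) * Gk (S (S j)) ^ 2) with (2 / (INR j + 2) * Gk (S (S j)) ^ 2) by (field; lra).
exact Hg.
Qed.

Lemma yy_lo (n : nat) : (1 <= n)%nat -> 2 / (INR n + 1) <= yy n.
Proof.
intros Hn. destruct n as [|k]; [lia|].
unfold yy. simpl pred.
pose proof (Gk_cs k) as H. rewrite (Gk_rec k) in H.
pose proof (Gk_pos k). pose proof (Gk_pos (S k)). pose proof (pos_INR k).
rewrite S_INR.
replace ((Gk k / Gk (S k)) ^ 2) with (Gk k ^ 2 / Gk (S k) ^ 2) by (field; lra).
apply Rmult_le_reg_r with (Gk (S k) ^ 2 * (INR k + 2)). apply Rmult_lt_0_compat; [apply pow_lt|]; lra.
replace (Gk k ^ 2 / Gk (S k) ^ 2 * (Gk (S k) ^ 2 * (INR k + 2))) with (Gk k ^ 2 * (INR k + 2)) by (field; lra).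
replace (2 / (INR k + 1 + 1) * (Gk (S k) ^ 2 * (INR k + 2))) with (2 * Gk (S k) ^ 2) by (field; lra).
nra.
Qed.

Lemma y_upper (n : nat) : (1 <= n)%nat -> yy n < Uf (INR n) PI.
Proof.
pose proof PI_bounds as Hp.
apply (up_abs yy (fun n => Uf (INR n) PI) 5); [lra| | | | |].
- intros; apply yy_pos.
- intros m Hm. apply Uf_pos; auto. apply (le_INR 1) in Hm. simpl in Hm. lra.
- apply yy_rec.
- intros m Hm. replace (INR (S (S m))) with (INR m + 2) by (rewrite !S_INR; ring).
  apply Uf_mono; auto. apply (le_INR 1) in Hm. simpl in Hm. lra.
- intros m Hm. eapply Rle_trans; [apply yy_up; auto|].
  apply Uf_lim; auto. apply (le_INR 2) in Hm. simpl in Hm. lra.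
Qed.

Lemma y_lower (n : nat) : (10 <= n)%nat -> Lf (INR n) PI < yy n.
Proof.
pose proof PI_bounds as Hp.
assert (H10 : forall m, (10 <= m)%nat -> 10 <= INR m).
{ intros m Hm. apply le_INR in Hm. replace (INR 10) with 10 in Hm by (simpl; ring). exact Hm. }
apply (lo_abs yy (fun n => Lf (INR n) PI) 5 10); [lra|lia| | | | |].
- intros; apply yy_pos.
- intros m Hm. apply Lf_pos; auto.
- intros m Hm. apply yy_rec. lia.
- intros m Hm. replace (INR (S (S m))) with (INR m + 2) by (rewrite !S_INR; ring).
  apply Lf_mono; auto.
- intros m Hm. eapply Rle_trans; [apply Lf_lim; auto|].
  apply yy_lo. lia.
Qed.

Lemma ratio_eq (k : nat) :
  Omega (S k) / (Omega (Nat.sub (S k) 1) + Omega (S (S k))) =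
  sqrt PI * (Gk k / Gk (S k)) * (INR (S k) + 1) / (INR (S k) + 1 + 2 * PI).
Proof.
replace (Nat.sub (S k) 1) with k by lia.
unfold Omega. change (Gamma (INR k / 2 + 1)) with (Gk k).
change (Gamma (INR (S k) / 2 + 1)) with (Gk (S k)).
change (Gamma (INR (S (S k)) / 2 + 1)) with (Gk (S (S k))).
pose proof PI_RGT_0 as Hpi.
replace (INR (S k) / 2) with (INR k / 2 + /2) by (rewrite S_INR; field).
replace (INR (S (S k)) / 2) with (INR k / 2 + 1) by (rewrite !S_INR; field).
rewrite !Rpower_plus, Rpower_sqrt, Rpower_1 by lra.
rewrite Gk_rec.
pose proof (rpow_pos PI (INR k / 2)). pose proof (Gk_pos k). pose proof (Gk_pos (S k)).
pose proof (pos_INR k). pose proof (sqrt_lt_R0 PI Hpi).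
rewrite S_INR. field. repeat split; try lra. nra.
Qed.

Theorem theorem12 (n : nat) (hn : (1 <= n)%nat) :
  sqrt (2 * PI / (INR n + 4 * PI + /2) + eps_1 n)
    < Omega n / (Omega (Nat.sub n 1) + Omega (S n))
  /\ Omega n / (Omega (Nat.sub n 1) + Omega (S n))
    < sqrt (2 * PI / (INR n + 4 * PI + /2) + eps_2 n).
Proof.
destruct n as [|k]; [lia|].
rewrite ratio_eq.
pose proof PI_bounds as Hp. pose proof PI_RGT_0 as Hpi.
assert (Hx : 1 <= INR (S k)) by (rewrite S_INR; pose proof (pos_INR k); lra).
assert (Ey : yy (S k) = (Gk k / Gk (S k))^2) by reflexivity.
set (r := sqrt PI * (Gk k / Gk (S k)) * (INR (S k) + 1) / (INR (S k) + 1 + 2 * PI)).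
assert (Hr : 0 < r).
{ unfold r. pose proof (Gk_pos k). pose proof (Gk_pos (S k)). pose proof (sqrt_lt_R0 PI Hpi).
  apply Rdiv_lt_0_compat; [|lra].
  apply Rmult_lt_0_compat; [apply Rmult_lt_0_compat|lra]; [lra|apply Rdiv_lt_0_compat; lra]. }
assert (Er2 : r^2 = PI * yy (S k) * (INR (S k) + 1)^2 / (INR (S k) + 1 + 2 * PI)^2).
{ assert (E1 : r^2 = (sqrt PI)^2 * (Gk k / Gk (S k))^2 * (INR (S k)+1)^2 / (INR (S k)+1+2*PI)^2)
    by (unfold r; pose proof (Gk_pos (S k)); field; lra).
  rewrite E1, Ey. replace ((sqrt PI)^2) with PI by (simpl; rewrite Rmult_1_r, sqrt_sqrt; lra). reflexivity. }
set (x := INR (S k)) in *.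
assert (EB : 2 * PI / (x + 4 * PI + /2) + eps_2 (S k) = Qu x PI / (x^4 * (x + 4 * PI + /2))).
{ unfold eps_2, eps_1, Qu, cc1, dd. fold x. field. split; lra. }
assert (EA : 2 * PI / (x + 4 * PI + /2) + eps_1 (S k) = Ql x PI / (x^4 * (x + 4 * PI + /2))).
{ unfold eps_1, Ql, cc1. fold x. field. split; lra. }
set (K := PI * (x + 1)^2 / (x + 1 + 2 * PI)^2).
assert (HK : 0 < K) by (unfold K; apply Rdiv_lt_0_compat; [apply Rmult_lt_0_compat; [lra|apply pow_lt; lra]|apply pow_lt; lra]).
assert (Er2' : r^2 = yy (S k) * K) by (rewrite Er2; unfold K; field; lra).
assert (Hsq : sqrt (r^2) = r) by (apply sqrt_pow2; lra).
split.
- rewrite EA.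
  destruct (Compare_dec.le_lt_dec 10 (S k)) as [H10|H10].
  + pose proof (y_lower (S k) H10) as Hl. fold x in Hl.
    assert (EL : Lf x PI * K = Ql x PI / (x^4 * (x + 4 * PI + /2))) by (unfold Lf, K; field; repeat split; lra).
    assert (HA : Ql x PI / (x^4 * (x + 4 * PI + /2)) < r^2).
    { rewrite <- EL, Er2'. apply Rmult_lt_compat_r; auto. }
    destruct (Rle_or_lt (Ql x PI / (x^4 * (x + 4 * PI + /2))) 0) as [Hneg|Hpos].
    * rewrite sqrt_neg_0; auto.
    * rewrite <- Hsq. apply sqrt_lt_1_alt. lra.
  + rewrite sqrt_neg_0; [lra|].
    assert (Hd : 0 < x^4 * (x + 4 * PI + /2)) by (apply Rmult_lt_0_compat; [apply pow_lt|]; lra).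
    assert (Hq : Ql x PI < 0).
    { unfold x.
      destruct k as [|k]. { replace (INR 1) with 1 by (simpl; ring). apply QlNeg1; auto. }
      destruct k as [|k]. { replace (INR 2) with 2 by (simpl; ring). apply QlNeg2; auto. }
      destruct k as [|k]. { replace (INR 3) with 3 by (simpl; ring). apply QlNeg3; auto. }
      destruct k as [|k]. { replace (INR 4) with 4 by (simpl; ring). apply QlNeg4; auto. }
      destruct k as [|k]. { replace (INR 5) with 5 by (simpl; ring). apply QlNeg5; auto. }
      destruct k as [|k]. { replace (INR 6) with 6 by (simpl; ring). apply QlNeg6; auto. }
      destruct k as [|k]. { replace (INR 7) with 7 by (simpl; ring). apply QlNeg7; auto. }
      destruct k as [|k]. { replace (INR 8) with 8 by (simpl; ring). apply QlNeg8; auto. }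
      destruct k as [|k]. { replace (INR 9) with 9 by (simpl; ring). apply QlNeg9; auto. }
      exfalso. lia. }
    left. apply Rdiv_neg_pos; auto.
- rewrite EB.
  pose proof (y_upper (S k) ltac:(lia)) as Hu. fold x in Hu.
  assert (EU : Uf x PI * K = Qu x PI / (x^4 * (x + 4 * PI + /2))) by (unfold Uf, K; field; repeat split; lra).
  assert (HB : r^2 < Qu x PI / (x^4 * (x + 4 * PI + /2))).
  { rewrite <- EU, Er2'. apply Rmult_lt_compat_r; auto. }
  rewrite <- Hsq. apply sqrt_lt_1_alt. split; [apply pow2_ge_0|exact HB].
Qed.
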